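(* Let $(M_0,d,\Gamma)$ be a cone-like space. For every $x\in M_0$ there is a constant $K_x>0$ such that $d(x,f(x))<K_x$ for every $f\in\Gamma$ with $\rho(f)<1$.
   Context: A cone-like space is a locally compact metric space $(M_0,d)$ together with a finitely generated, non-trivial group $\Gamma$ acting freely and properly discontinuously on $M_0$ by homotheties (i.e. for each $f\in\Gamma$ there is $\rho(f)>0$ with $d(f(x),f(y))=\rho(f)d(x,y)$ for all $x,y$), such that the identity is the only element of $\Gamma$ acting as an isometry, and such that the quotient $M_0/\Gamma$ is compact. (Such a $\Gamma$ is necessarily Abelian.) *)

(* Defs.v *)
From Stdlib Require Import Reals List.
Open Scope R_scope.

Section ConeLike.
Variable M : Type.
Variable d : M -> M -> R.

Definition is_metric : Prop :=
  (forall x y, 0 <= d x y) /\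
  (forall x y, d x y = 0 <-> x = y) /\
  (forall x y, d x y = d y x) /\
  (forall x y z, d x z <= d x y + d y z).

Definition ball (x : M) (r : R) : M -> Prop := fun y => d x y < r.

Definition is_open (U : M -> Prop) : Prop :=
  forall x, U x -> exists eps, 0 < eps /\ forall y, ball x eps y -> U y.

Definition is_compact (K : M -> Prop) : Prop :=
  forall (I : Type) (U : I -> M -> Prop),
    (forall i, is_open (U i)) ->
    (forall x, K x -> exists i, U i x) ->
    exists l : list I, forall x, K x -> exists i, In i l /\ U i x.

Definition locally_compact : Prop :=
  forall x, exists K eps, 0 < eps /\ is_compact K /\ forall y, ball x eps y -> K y.

Variable G : Type.
Variable one : G.
Variable mul : G -> G -> G.
Variable inv : G -> G.
Variable act : G -> M -> M.
Variable rho : G -> R.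

Definition is_group : Prop :=
  (forall a b c, mul a (mul b c) = mul (mul a b) c) /\
  (forall a, mul one a = a /\ mul a one = a) /\
  (forall a, mul (inv a) a = one /\ mul a (inv a) = one).

Inductive gen_by (l : list G) : G -> Prop :=
| gen_one : gen_by l one
| gen_in : forall g, In g l -> gen_by l g
| gen_mul : forall g h, gen_by l g -> gen_by l h -> gen_by l (mul g h)
| gen_inv : forall g, gen_by l g -> gen_by l (inv g).

Definition finitely_generated : Prop :=
  exists l : list G, forall g, gen_by l g.

Definition nontrivial : Prop := exists g, g <> one.

Definition is_action : Prop :=
  (forall x, act one x = x) /\
  (forall g h x, act (mul g h) x = act g (act h x)).

Definition acts_freely : Prop := forall g x, act g x = x -> g = one.

Definition properly_discontinuous : Prop :=
  forall K, is_compact K ->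
    exists l : list G, forall g, (exists x, K x /\ K (act g x)) -> In g l.

Definition acts_by_homotheties : Prop :=
  forall g, 0 < rho g /\ forall x y, d (act g x) (act g y) = rho g * d x y.

Definition only_identity_isometry : Prop :=
  forall g, (forall x y, d (act g x) (act g y) = d x y) -> g = one.

(* compactness of the quotient M/Γ: open sets of M/Γ are exactly images of
   Γ-invariant open subsets of M, so every cover of M by Γ-invariant open
   sets has a finite subcover *)
Definition compact_quotient : Prop :=
  forall (I : Type) (U : I -> M -> Prop),
    (forall i, is_open (U i)) ->
    (forall i g x, U i x -> U i (act g x)) ->
    (forall x, exists i, U i x) ->
    exists l : list I, forall x, exists i, In i l /\ U i x.

Definition cone_like : Prop :=
  is_metric /\ locally_compact /\ is_group /\ finitely_generated /\
  nontrivial /\ is_action /\ acts_freely /\ properly_discontinuous /\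
  acts_by_homotheties /\ only_identity_isometry /\ compact_quotient.

End ConeLike.

(* Main.v *)
Require Import Defs.
From Stdlib Require Import Reals List Lra Psatz.
Open Scope R_scope.

Theorem lemma2p4 (M : Type) (d : M -> M -> R) (G : Type) (one : G)
  (mul : G -> G -> G) (inv : G -> G) (act : G -> M -> M) (rho : G -> R)
  (Hcone : cone_like M d G one mul inv act rho) :
  forall x : M, exists K : R, 0 < K /\
    forall f : G, rho f < 1 -> d x (act f x) < K.
Proof.
  destruct Hcone as [Hmet [Hlc [Hgrp [Hfg [Hnt [Hact [Hfree [Hpd [Hhom [Hiso Hcq]]]]]]]]]].
  destruct Hmet as [Hpos [Hzero [Hsym Htri]]].
  destruct Hgrp as [Hassoc [Hid Hinv]].
  destruct Hact as [Hact1 HactM].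
  destruct Hnt as [g0 Hg0].
  intro x.
  assert (Hdpos : 0 < d x (act g0 x)).
  { destruct (Hpos x (act g0 x)) as [H|H]; [exact H|].
    exfalso. apply Hg0. apply (Hfree g0 x). symmetry. apply Hzero. auto. }
  assert (Hmul : forall a b, rho (mul a b) = rho a * rho b).
  { intros a b.
    pose proof (proj2 (Hhom (mul a b)) x (act g0 x)) as H1.
    rewrite !HactM in H1.
    rewrite (proj2 (Hhom a)), (proj2 (Hhom b)) in H1.
    apply (Rmult_eq_reg_r (d x (act g0 x))); [|lra]. lra. }
  assert (Hone : rho one = 1).
  { pose proof (proj2 (Hhom one) x (act g0 x)) as H1.
    rewrite !Hact1 in H1.
    apply (Rmult_eq_reg_r (d x (act g0 x))); [|lra]. lra. }
  assert (Hcomm : forall f g y, act f (act g y) = act g (act f y)).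
  { intros f g y.
    set (h := mul (mul f g) (inv (mul g f))).
    assert (Hrh : rho h = 1).
    { unfold h. rewrite Hmul.
      pose proof (Hmul (inv (mul g f)) (mul g f)) as E.
      rewrite (proj1 (Hinv (mul g f))), Hone in E.
      rewrite !Hmul in E |- *.
      assert (0 < rho f) by apply (proj1 (Hhom f)).
      assert (0 < rho g) by apply (proj1 (Hhom g)).
      nra. }
    assert (Hh : h = one).
    { apply Hiso. intros a b. rewrite (proj2 (Hhom h)), Hrh. ring. }
    assert (E : act h (act (mul g f) y) = act f (act g y)).
    { unfold h. rewrite HactM, HactM, <- (HactM (inv (mul g f))).
      rewrite (proj1 (Hinv (mul g f))), Hact1. reflexivity. }
    rewrite Hh, Hact1 in E. rewrite !HactM in E. symmetry. exact E. }
  assert (Hc1 : rho g0 <> 1).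
  { intro Hc. apply Hg0. apply Hiso. intros a b.
    rewrite (proj2 (Hhom g0)), Hc. ring. }
  assert (Hd0 : 0 <= d x (act g0 x)) by lra.
  assert (Hs0 : d (act g0 x) x = d x (act g0 x)) by apply Hsym.
  destruct (Rlt_or_le (rho g0) 1) as [Hlt|Hge].
  - exists (2 * d x (act g0 x) / (1 - rho g0) + 1). split.
    + assert (0 <= 2 * d x (act g0 x) / (1 - rho g0)).
      { apply Rlt_le, Rdiv_lt_0_compat; lra. }
      lra.
    + intros f Hf.
      assert (E1 : d (act g0 x) (act g0 (act f x)) = rho g0 * d x (act f x))
        by (apply (proj2 (Hhom g0))).
      assert (E2 : d (act g0 (act f x)) (act f x) = rho f * d x (act g0 x)).
      { rewrite <- Hcomm. rewrite (proj2 (Hhom f)). rewrite Hsym. reflexivity. }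
      pose proof (Htri x (act g0 x) (act f x)) as T1.
      pose proof (Htri (act g0 x) (act g0 (act f x)) (act f x)) as T2.
      assert (0 < rho f) by apply (proj1 (Hhom f)).
      assert (Hk : d x (act f x) * (1 - rho g0) <= 2 * d x (act g0 x)) by nra.
      apply (Rmult_lt_reg_r (1 - rho g0)); [lra|].
      replace ((2 * d x (act g0 x) / (1 - rho g0) + 1) * (1 - rho g0))
        with (2 * d x (act g0 x) + (1 - rho g0)) by (field; lra).
      lra.
  - assert (Hgt : 1 < rho g0) by lra.
    exists (2 * d x (act g0 x) / (rho g0 - 1) + 1). split.
    + assert (0 <= 2 * d x (act g0 x) / (rho g0 - 1)).
      { apply Rlt_le, Rdiv_lt_0_compat; lra. }
      lra.
    + intros f Hf.
      assert (E1 : d (act g0 x) (act g0 (act f x)) = rho g0 * d x (act f x))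
        by (apply (proj2 (Hhom g0))).
      assert (E2 : d (act f x) (act g0 (act f x)) = rho f * d x (act g0 x)).
      { rewrite <- Hcomm. rewrite (proj2 (Hhom f)). reflexivity. }
      pose proof (Htri (act g0 x) x (act g0 (act f x))) as T1.
      pose proof (Htri x (act f x) (act g0 (act f x))) as T2.
      assert (0 < rho f) by apply (proj1 (Hhom f)).
      assert (Hk : d x (act f x) * (rho g0 - 1) <= 2 * d x (act g0 x)) by nra.
      apply (Rmult_lt_reg_r (rho g0 - 1)); [lra|].
      replace ((2 * d x (act g0 x) / (rho g0 - 1) + 1) * (rho g0 - 1))
        with (2 * d x (act g0 x) + (rho g0 - 1)) by (field; lra).
      lra.
Qed.
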